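(* Let $\mathfrak{P}$ be a compactness-like topological property and $X$ a space. Then $\lambda_\mathfrak{P}X=\beta X$ if and only if $X$ has $\mathfrak{P}$.
   Context: All spaces are completely regular Hausdorff; $\beta X$ is the Stone–Čech compactification. $\mathrm{Coz}(X)$ is the set of cozero-sets of $X$. $\lambda_\mathfrak{P}X=\bigcup\{\mathrm{int}_{\beta X}\mathrm{cl}_{\beta X}C: C\in\mathrm{Coz}(X),\ \mathrm{cl}_XC\text{ has }\mathfrak{P}\}$. A topological property is compactness-like if it is hereditary to clopen subspaces, finitely additive (finite disjoint unions of closed subspaces with $\mathfrak{P}$ have $\mathfrak{P}$), invariant and inverse invariant under perfect surjections, and satisfies Mrówka's condition (W): if a space $Z$ has a point $p$ with an open base $\mathscr{B}$ at $p$ such that $Z\setminus B$ has $\mathfrak{P}$ for all $B\in\mathscr{B}$, then $Z$ has $\mathfrak{P}$. *)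

(* Defs.v *)
From Stdlib Require Import Reals List.

Record space := Space {
  pt :> Type;
  is_open : (pt -> Prop) -> Prop;
  open_ext : forall U V : pt -> Prop, (forall x, U x <-> V x) -> is_open U -> is_open V;
  open_full : is_open (fun _ => True);
  open_inter : forall U V, is_open U -> is_open V -> is_open (fun x => U x /\ V x);
  open_union : forall (I : Type) (F : I -> pt -> Prop),
      (forall i, is_open (F i)) -> is_open (fun x => exists i, F i x)
}.

Definition closed (X : space) (A : X -> Prop) : Prop := is_open X (fun x => ~ A x).

Definition closure (X : space) (A : X -> Prop) (x : X) : Prop :=
  forall U, is_open X U -> U x -> exists y, U y /\ A y.

Definition interior (X : space) (A : X -> Prop) (x : X) : Prop :=
  exists U, is_open X U /\ U x /\ forall y, U y -> A y.

Definition image {X Y : Type} (f : X -> Y) (A : X -> Prop) (y : Y) : Prop :=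
  exists x, A x /\ f x = y.

Definition sub_open (X : space) (A : X -> Prop) (V : {x : X | A x} -> Prop) : Prop :=
  exists U, is_open X U /\ forall x, V x <-> U (proj1_sig x).

Lemma sub_open_ext (X : space) (A : X -> Prop) :
  forall U V : {x : X | A x} -> Prop, (forall x, U x <-> V x) -> sub_open X A U -> sub_open X A V.
Proof.
  intros U V H [W [HW HU]]. exists W. split; [exact HW|].
  intros x. rewrite <- H. apply HU.
Qed.

Lemma sub_open_full (X : space) (A : X -> Prop) : sub_open X A (fun _ => True).
Proof. exists (fun _ => True). split; [apply open_full | tauto]. Qed.

Lemma sub_open_inter (X : space) (A : X -> Prop) :
  forall U V, sub_open X A U -> sub_open X A V -> sub_open X A (fun x => U x /\ V x).
Proof.
  intros U V [U' [HU' HU]] [V' [HV' HV]].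
  exists (fun x => U' x /\ V' x). split; [apply open_inter; assumption|].
  intros x. rewrite HU, HV. tauto.
Qed.

Lemma sub_open_union (X : space) (A : X -> Prop) :
  forall (I : Type) (F : I -> {x : X | A x} -> Prop),
    (forall i, sub_open X A (F i)) -> sub_open X A (fun x => exists i, F i x).
Proof.
  intros I F HF.
  pose (J := {p : I * (X -> Prop) | is_open X (snd p) /\
                 forall x, F (fst p) x <-> snd p (proj1_sig x)}).
  exists (fun y => exists j : J, snd (proj1_sig j) y). split.
  - apply (open_union X J (fun j => snd (proj1_sig j))).
    intros j. exact (proj1 (proj2_sig j)).
  - intros x. split.
    + intros [i Hi]. destruct (HF i) as [U [HU HiU]].
      exists (exist _ (i, U) (conj HU HiU)). simpl. apply HiU. exact Hi.
    + intros [[[i U] [HU HiU]] Hx]. simpl in Hx. exists i. apply (proj2 (HiU x)). exact Hx.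
Qed.

Definition subspace (X : space) (A : X -> Prop) : space :=
  Space {x : X | A x} (sub_open X A) (sub_open_ext X A) (sub_open_full X A)
        (sub_open_inter X A) (sub_open_union X A).

Definition continuous {X Y : space} (f : X -> Y) : Prop :=
  forall U, is_open Y U -> is_open X (fun x => U (f x)).

Definition closed_map {X Y : space} (f : X -> Y) : Prop :=
  forall F, closed X F -> closed Y (image f F).

Definition compact (X : space) : Prop :=
  forall (I : Type) (U : I -> X -> Prop),
    (forall i, is_open X (U i)) -> (forall x, exists i, U i x) ->
    exists l : list I, forall x, exists i, In i l /\ U i x.

Definition perfect_surj {X Y : space} (f : X -> Y) : Prop :=
  continuous f /\ closed_map f /\ (forall y, exists x, f x = y) /\
  (forall y, compact (subspace X (fun x => f x = y))).

Definition hausdorff (X : space) : Prop :=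
  forall x y : X, x <> y -> exists U V, is_open X U /\ is_open X V /\ U x /\ V y /\
    forall z, ~ (U z /\ V z).

(** Continuity of real-valued maps (w.r.t. the usual topology of R, which is
    generated by the open rays). *)
Definition real_continuous (X : space) (f : X -> R) : Prop :=
  forall a : R, is_open X (fun x => Rlt a (f x)) /\ is_open X (fun x => Rlt (f x) a).

Definition completely_regular (X : space) : Prop :=
  forall (F : X -> Prop) (x : X), closed X F -> ~ F x ->
    exists f : X -> R, real_continuous X f /\ (forall y, Rle 0 (f y) /\ Rle (f y) 1) /\
      f x = 0%R /\ forall y, F y -> f y = 1%R.

Definition tychonoff (X : space) : Prop := hausdorff X /\ completely_regular X.

Definition cozero (X : space) (C : X -> Prop) : Prop :=
  exists f : X -> R, real_continuous X f /\ forall x, C x <-> f x <> 0%R.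

Definition embedding {X Y : space} (e : X -> Y) : Prop :=
  continuous e /\ (forall x1 x2, e x1 = e x2 -> x1 = x2) /\
  forall U, is_open X U -> exists V, is_open Y V /\ forall x, U x <-> V (e x).

Definition stone_cech (X Y : space) (e : X -> Y) : Prop :=
  compact Y /\ hausdorff Y /\ embedding e /\ (forall y, closure Y (image e (fun _ => True)) y) /\
  forall (K : space) (f : X -> K), compact K -> hausdorff K -> continuous f ->
    exists g : Y -> K, continuous g /\ forall x, g (e x) = f x.

(** Topological properties are predicates on spaces; only their values on
    (completely regular Hausdorff) spaces matter. *)
Definition clopen_hereditary (P : space -> Prop) : Prop :=
  forall Z : space, tychonoff Z -> P Z ->
    forall A : Z -> Prop, is_open Z A -> closed Z A -> P (subspace Z A).

Definition finitely_additive (P : space -> Prop) : Prop :=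
  forall Z : space, tychonoff Z -> forall (n : nat) (A : nat -> Z -> Prop),
    (forall i, (i < n)%nat -> closed Z (A i)) ->
    (forall i j x, (i < n)%nat -> (j < n)%nat -> A i x -> A j x -> i = j) ->
    (forall x, exists i, (i < n)%nat /\ A i x) ->
    (forall i, (i < n)%nat -> P (subspace Z (A i))) ->
    P Z.

Definition perfect_invariant (P : space -> Prop) : Prop :=
  forall (Z W : space) (f : Z -> W), tychonoff Z -> tychonoff W -> perfect_surj f ->
    (P Z <-> P W).

Definition open_base_at (Z : space) (p : Z) (B : (Z -> Prop) -> Prop) : Prop :=
  (forall U, B U -> is_open Z U /\ U p) /\
  (forall V, is_open Z V -> V p -> exists U, B U /\ forall z, U z -> V z).

Definition condition_W (P : space -> Prop) : Prop :=
  forall (Z : space) (p : Z) (B : (Z -> Prop) -> Prop), tychonoff Z -> open_base_at Z p B ->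
    (forall U, B U -> P (subspace Z (fun z => ~ U z))) -> P Z.

Definition compactness_like (P : space -> Prop) : Prop :=
  clopen_hereditary P /\ finitely_additive P /\ perfect_invariant P /\ condition_W P.

(** lambda_P X, as a subset of beta X = Y (X identified with e(X)). *)
Definition lambdaP (P : space -> Prop) (X Y : space) (e : X -> Y) (y : Y) : Prop :=
  exists C : X -> Prop, cozero X C /\ P (subspace X (closure X C)) /\
    interior Y (closure Y (image e C)) y.

(* Main.v *)
Require Import Defs.
From Stdlib Require Import Reals List.
From Stdlib Require Import Classical ProofIrrelevance Lia Lra Arith.
Require Import Defs.

Lemma open_empty (X : space) : is_open X (fun _ => False).
Proof.
  apply (open_ext X (fun x => exists i : False, (fun _ _ => True) i x)).
  - intros x; split; [intros [[] _] | intros []].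
  - apply open_union. intros [].
Qed.

Lemma open_const (X : space) (Q : Prop) : is_open X (fun _ => Q).
Proof.
  destruct (classic Q) as [H|H].
  - apply (open_ext X (fun _ => True)); [intros; tauto | apply open_full].
  - apply (open_ext X (fun _ => False)); [intros; tauto | apply open_empty].
Qed.

Lemma open_or (X : space) (U V : X -> Prop) : is_open X U -> is_open X V ->
  is_open X (fun x => U x \/ V x).
Proof.
  intros HU HV.
  apply (open_ext X (fun x => exists b : bool, (if b then U else V) x)).
  - intros x; split.
    + intros [[|] H]; tauto.
    + intros [H|H]; [exists true | exists false]; exact H.
  - apply open_union. intros [|]; assumption.
Qed.

Lemma open_fin_inter (X : space) (n : nat) (G : nat -> X -> Prop) :
  (forall i, (i < n)%nat -> is_open X (G i)) ->
  is_open X (fun x => forall i, (i < n)%nat -> G i x).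
Proof.
  induction n as [|n IH]; intros HG.
  - apply (open_ext X (fun _ => True)); [intros x; split; intros; [lia|exact I] | apply open_full].
  - apply (open_ext X (fun x => (forall i, (i < n)%nat -> G i x) /\ G n x)).
    + intros x; split.
      * intros [H1 H2] i Hi. destruct (Nat.eq_dec i n) as [e|e]; [rewrite e; exact H2 | apply H1; lia].
      * intros H; split; [intros; apply H; lia | apply H; lia].
    + apply open_inter; [apply IH; intros; apply HG; lia | apply HG; lia].
Qed.

Lemma closure_closed (X : space) (A : X -> Prop) : closed X (closure X A).
Proof.
  unfold closed.
  apply (open_ext X (fun x => exists U : {U : X -> Prop | is_open X U /\ forall y, U y -> ~ A y}, proj1_sig U x)).
  - intros x; split.
    + intros [[U [HU HA]] Hx] Hc. simpl in Hx. destruct (Hc U HU Hx) as [y [Hy Ay]]. exact (HA y Hy Ay).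
    + intros Hn. apply not_all_ex_not in Hn as [U Hn].
      apply imply_to_and in Hn as [HU Hn]. apply imply_to_and in Hn as [Hx Hn].
      exists (exist _ U (conj HU (fun y Hy Ay => Hn (ex_intro _ y (conj Hy Ay))))). exact Hx.
  - apply open_union. intros U; exact (proj1 (proj2_sig U)).
Qed.

Lemma interior_open (X : space) (A : X -> Prop) : is_open X (interior X A).
Proof.
  apply (open_ext X (fun x => exists U : {U : X -> Prop | is_open X U /\ forall y, U y -> A y}, proj1_sig U x)).
  - intros x; split.
    + intros [[U [HU HA]] Hx]. exists U. simpl in Hx. auto.
    + intros [U [HU [Hx HA]]]. exists (exist _ U (conj HU HA)). exact Hx.
  - apply open_union. intros U; exact (proj1 (proj2_sig U)).
Qed.

Lemma sig_pi (T : Type) (A : T -> Prop) (a b : {x : T | A x}) : proj1_sig a = proj1_sig b -> a = b.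
Proof. destruct a, b; simpl; intros; subst; f_equal; apply proof_irrelevance. Qed.

Lemma subspace_tych (X : space) (A : X -> Prop) : tychonoff X -> tychonoff (subspace X A).
Proof.
  intros [HH HC]. split.
  - intros x y Hxy. assert (Hne : proj1_sig x <> proj1_sig y) by (intro E; apply Hxy, sig_pi, E).
    destruct (HH _ _ Hne) as [U [V [HU [HV [Ux [Vy Hd]]]]]].
    exists (fun z : {x | A x} => U (proj1_sig z)), (fun z : {x | A x} => V (proj1_sig z)).
    split; [exists U; split; [exact HU| tauto]|].
    split; [exists V; split; [exact HV| tauto]|].
    split; [exact Ux|]. split; [exact Vy|]. intros z; apply Hd.
  - intros F x HF Fx. destruct HF as [U [HU HFU]].
    assert (Ux : U (proj1_sig x)) by (apply HFU; exact Fx).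
    assert (Hcl : closed X (fun w => ~ U w)).
    { unfold closed. apply (open_ext X U); [intros w; split; [tauto| apply NNPP] | exact HU]. }
    destruct (HC _ _ Hcl (fun H => H Ux)) as [f [Hf [Hr [H0 H1]]]].
    exists (fun z : {x | A x} => f (proj1_sig z)). split.
    + intros a. destruct (Hf a) as [Ha1 Ha2]. split.
      * exists (fun w => Rlt a (f w)); split; [exact Ha1| tauto].
      * exists (fun w => Rlt (f w) a); split; [exact Ha2| tauto].
    + split; [intros; apply Hr|]. split; [exact H0|].
      intros y Fy. apply H1. intros Uy. apply (proj2 (HFU y)) in Uy. exact (Uy Fy).
Qed.

Lemma finite_compact (W : space) (h : W -> nat) (n : nat) :
  (forall w, (h w < n)%nat) -> (forall w w', h w = h w' -> w = w') -> compact W.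
Proof.
  intros Hb Hi I U _ Hc.
  assert (forall m, exists l : list I, forall w, (h w < m)%nat -> exists i, In i l /\ U i w).
  { induction m as [|m [l Hl]].
    - exists nil; intros; lia.
    - destruct (classic (exists w, h w = m)) as [[w Hw]|Hn].
      + destruct (Hc w) as [i Hiw]. exists (i :: l). intros w' Hw'.
        destruct (Nat.eq_dec (h w') m) as [E|E].
        * assert (w' = w) by (apply Hi; congruence). subst. exists i; split; [left; reflexivity| exact Hiw].
        * destruct (Hl w') as [j [Hj Uj]]; [lia|]. exists j; split; [right; exact Hj| exact Uj].
      + exists l. intros w' Hw'. apply Hl. destruct (Nat.eq_dec (h w') m); [exfalso; eauto| lia]. }
  destruct (H n) as [l Hl]. exists l. intros w. apply Hl, Hb.
Qed.

Lemma homeo_perfect (X Y : space) (g : X -> Y) :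
  continuous g -> (forall x x', g x = g x' -> x = x') -> (forall y, exists x, g x = y) ->
  (forall U, is_open X U -> is_open Y (image g U)) -> perfect_surj g.
Proof.
  intros Hc Hi Hs Ho. split; [exact Hc|]. split; [|split; [exact Hs|]].
  - intros F HF. unfold closed. apply (open_ext Y (image g (fun x => ~ F x))); [|apply Ho, HF].
    intros y; split.
    + intros [x [Fx E]] [x' [Fx' E']]. subst. apply Hi in E'. subst. tauto.
    + intros Hn. destruct (Hs y) as [x E]. exists x. split; [|exact E]. intros Fx. apply Hn. exists x; tauto.
  - intros y. apply (finite_compact _ (fun _ => 0%nat) 1); [intros; lia|].
    intros w w' _. apply sig_pi. apply Hi. rewrite (proj2_sig w), (proj2_sig w'). reflexivity.
Qed.

Definition sum_open (X : space) (U : nat * X -> Prop) : Prop :=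
  forall k, is_open X (fun x => U (k, x)).

Lemma sum_open_ext (X : space) : forall U V : nat * X -> Prop,
  (forall x, U x <-> V x) -> sum_open X U -> sum_open X V.
Proof. intros U V H HU k. apply (open_ext X (fun x => U (k, x))); [intros; apply H | apply HU]. Qed.

Lemma sum_open_full (X : space) : sum_open X (fun _ => True).
Proof. intros k; apply open_full. Qed.

Lemma sum_open_inter (X : space) : forall U V, sum_open X U -> sum_open X V ->
  sum_open X (fun x => U x /\ V x).
Proof. intros U V HU HV k. apply open_inter; [apply HU|apply HV]. Qed.

Lemma sum_open_union (X : space) : forall (I : Type) (F : I -> nat * X -> Prop),
  (forall i, sum_open X (F i)) -> sum_open X (fun x => exists i, F i x).
Proof. intros I F HF k. apply (open_union X I (fun i x => F i (k, x))). intros i; apply HF. Qed.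

Definition sumsp (X : space) : space :=
  Space (nat * X) (sum_open X) (sum_open_ext X) (sum_open_full X)
        (sum_open_inter X) (sum_open_union X).

Lemma sumsp_tych (X : space) : tychonoff X -> tychonoff (sumsp X).
Proof.
  intros [HH HC]. split.
  - intros [i x] [j y] Hne. destruct (Nat.eq_dec i j) as [E|E].
    + subst j. assert (x <> y) by congruence.
      destruct (HH _ _ H) as [U [V [HU [HV [Ux [Vy Hd]]]]]].
      exists (fun p : nat * X => U (snd p)), (fun p : nat * X => V (snd p)).
      split; [intros k; exact HU|]. split; [intros k; exact HV|].
      split; [exact Ux|]. split; [exact Vy|]. intros z; apply Hd.
    + exists (fun p : nat * X => fst p = i), (fun p : nat * X => fst p = j).
      split; [intros k; simpl; apply open_const|]. split; [intros k; simpl; apply open_const|].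
      split; [reflexivity|]. split; [reflexivity|]. intros z [H1 H2]. congruence.
  - intros F [i x] HF Fx.
    assert (Hcl : closed X (fun y => F (i, y))) by (exact (HF i)).
    destruct (HC _ _ Hcl Fx) as [g [Hg [Hr [H0 H1]]]].
    exists (fun p : nat * X => if Nat.eq_dec (fst p) i then g (snd p) else 1%R). split.
    + intros a. split; intros k; simpl; destruct (Nat.eq_dec k i).
      * apply (Hg a).
      * first [apply (open_const X (Rlt a 1)) | apply (open_const X (Rlt 1 a))].
      * apply (Hg a).
      * first [apply (open_const X (Rlt a 1)) | apply (open_const X (Rlt 1 a))].
    + split; [intros [k y]; simpl; destruct (Nat.eq_dec k i); [apply Hr| lra]|].
      split; [simpl; destruct (Nat.eq_dec i i); [exact H0| congruence]|].
      intros [k y] Fy; simpl. destruct (Nat.eq_dec k i); [subst; apply H1, Fy| reflexivity].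
Qed.

Definition Dp (X : space) (n : nat) (A : nat -> X -> Prop) (p : nat * X) : Prop :=
  (fst p < n)%nat /\ A (fst p) (snd p).

Definition Zsp (X : space) n A := subspace (sumsp X) (Dp X n A).

Definition fZ (X : space) n A (z : Zsp X n A) : X := snd (proj1_sig z).

Lemma fZ_perfect (X : space) n A :
  (forall i, closed X (A i)) -> (forall x, exists i, (i < n)%nat /\ A i x) ->
  perfect_surj (fZ X n A).
Proof.
  intros Hcl Hcov. split; [|split; [|split]].
  - intros U HU. exists (fun p : nat * X => U (snd p)). split; [intros k; exact HU| tauto].
  - intros F HF. destruct HF as [V [HV HFV]]. unfold closed.
    apply (open_ext X (fun y => forall i, (i < n)%nat -> ~ A i y \/ V (i, y))).
    + intros y. split.
      * intros H [z [Fz E]]. destruct z as [[i y'] [Hi Ai]]. unfold fZ in E; simpl in E. subst y'.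
        destruct (H i Hi) as [H'|H']; [exact (H' Ai)|].
        apply (proj2 (HFV (exist _ (i, y) (conj Hi Ai)))) in H'. exact (H' Fz).
      * intros H i Hi. destruct (classic (A i y)) as [Ai|Ai]; [right|left; exact Ai].
        apply (proj1 (HFV (exist _ (i, y) (conj Hi Ai)))). intros Fz. apply H.
        exists (exist _ (i, y) (conj Hi Ai)). split; [exact Fz| reflexivity].
    + apply open_fin_inter. intros i _. apply open_or; [apply Hcl | apply HV].
  - intros y. destruct (Hcov y) as [i [Hi Ai]]. exists (exist _ (i, y) (conj Hi Ai)). reflexivity.
  - intros y. apply (finite_compact _ (fun w : subspace (Zsp X n A) (fun z => fZ X n A z = y) => fst (proj1_sig (proj1_sig w))) n).
    + intros w. exact (proj1 (proj2_sig (proj1_sig w))).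
    + intros [[[a b] Hab] Hw] [[[a' b'] Hab'] Hw'] E. apply sig_pi, sig_pi.
      unfold fZ in Hw, Hw'. simpl in *. subst. reflexivity.
Qed.

Definition piece (X : space) n A (i : nat) (z : Zsp X n A) : Prop := fst (proj1_sig z) = i.

Lemma piece_in (X : space) n A i (K : X -> Prop) (HAK : forall x, A i x -> K x)
  (w : subspace (Zsp X n A) (piece X n A i)) : K (snd (proj1_sig (proj1_sig w))).
Proof.
  apply HAK. destruct w as [[[k y] [Hk Ak]] E]. unfold piece in E; simpl in *. subst. exact Ak.
Qed.

Definition gmap (X : space) n A i (K : X -> Prop) (HAK : forall x, A i x -> K x)
  (w : subspace (Zsp X n A) (piece X n A i)) : subspace X K :=
  exist K _ (piece_in X n A i K HAK w).

Lemma gmap_perfect (X : space) n A i (K : X -> Prop) (HAK : forall x, A i x -> K x)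
  (HKA : forall x, K x -> A i x) : (i < n)%nat -> perfect_surj (gmap X n A i K HAK).
Proof.
  intros Hi. apply homeo_perfect.
  - intros U [W [HW HU]]. exists (fun z : Zsp X n A => W (snd (proj1_sig z))). split.
    + exists (fun p : nat * X => W (snd p)). split; [intros k; exact HW| tauto].
    + intros w. rewrite HU. reflexivity.
  - intros w w' E. apply sig_pi, sig_pi.
    assert (E' : snd (proj1_sig (proj1_sig w)) = snd (proj1_sig (proj1_sig w'))).
    { apply (f_equal (@proj1_sig _ _)) in E. exact E. }
    destruct w as [[[a b] Hab] Hw], w' as [[[a' b'] Hab'] Hw']. unfold piece in Hw, Hw'.
    simpl in *. subst. reflexivity.
  - intros [y Ky]. assert (Hd : Dp X n A (i, y)) by (split; [exact Hi| apply HKA, Ky]).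
    exists (exist (piece X n A i) (exist (Dp X n A) (i, y) Hd) eq_refl).
    apply sig_pi. reflexivity.
  - intros U [W [HW HUW]]. destruct HW as [V [HV HWV]].
    exists (fun x => V (i, x)). split; [apply HV|].
    intros [y Ky]. simpl. split.
    + intros [w [Uw E]]. subst. simpl. apply HUW in Uw. apply HWV in Uw.
      destruct w as [[[a b] Hab] Hw]. unfold piece in Hw. simpl in *. subst. apply (f_equal (@proj1_sig _ _)) in E. simpl in E. subst. exact Uw.
    + intros Vy. assert (Hd : Dp X n A (i, y)) by (split; [exact Hi| apply HKA, Ky]).
      exists (exist (piece X n A i) (exist (Dp X n A) (i, y) Hd) eq_refl). split.
      * apply HUW. apply HWV. exact Vy.
      * apply sig_pi. reflexivity.
Qed.

Lemma emb_closure (X Y : space) (e : X -> Y) (C : X -> Prop) (x : X) :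
  embedding e -> closure Y (image e C) (e x) -> closure X C x.
Proof.
  intros [_ [_ He]] Hc U HU Ux. destruct (He U HU) as [V [HV HUV]].
  destruct (Hc V HV (proj1 (HUV x) Ux)) as [y [Vy [x' [Cx' E]]]]. subst y.
  exists x'. split; [apply HUV, Vy | exact Cx'].
Qed.

Theorem lemma4p21 (P : space -> Prop) (X Y : space) (e : X -> Y) :
  compactness_like P -> tychonoff X -> stone_cech X Y e ->
  ((forall y : Y, lambdaP P X Y e y) <-> P X).
Proof.
  intros [Hclh [Hfa [Hpi HW]]] Htx [HYc [HYh [Hemb [Hdense Hext]]]]. split.
  - intros Hl.
    pose (I := {C : X -> Prop | cozero X C /\ P (subspace X (closure X C))}).
    destruct (HYc I (fun c => interior Y (closure Y (image e (proj1_sig c))))) as [l Hlc].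
    + intros c. apply interior_open.
    + intros y. destruct (Hl y) as [C [HC [HP Hint]]]. exists (exist _ C (conj HC HP)). exact Hint.
    + pose (n := length l).
      pose (A := fun i x => exists c : I, nth_error l i = Some c /\ closure X (proj1_sig c) x).
      assert (HAcl : forall i, closed X (A i)).
      { intros i. unfold closed. destruct (nth_error l i) as [c|] eqn:Ec.
        - apply (open_ext X (fun x => ~ closure X (proj1_sig c) x)); [|apply closure_closed].
          intros x. unfold A. split.
          + intros H [c' [E' H']]. rewrite Ec in E'. injection E' as ->. exact (H H').
          + intros H H'. apply H. exists c. split; assumption.
        - apply (open_ext X (fun _ => True)); [|apply open_full].
          intros x; split; [intros _ [c [E _]]; congruence| tauto]. }
      assert (Hcov : forall x, exists i, (i < n)%nat /\ A i x).
      { intros x. destruct (Hlc (e x)) as [c [Hin Hc]].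
        destruct (In_nth_error _ _ Hin) as [i Ei]. exists i. split.
        - apply nth_error_Some. congruence.
        - exists c. split; [exact Ei|]. apply (emb_closure X Y e _ _ Hemb).
          destruct Hc as [U [_ [Ux HU]]]. apply HU, Ux. }
      assert (HtZ : tychonoff (Zsp X n A)) by (apply subspace_tych, sumsp_tych, Htx).
      assert (HPZ : P (Zsp X n A)).
      { apply (Hfa _ HtZ n (piece X n A)).
        - intros i _. exists (fun p : nat * X => fst p <> i). split.
          + intros k. simpl. apply open_const.
          + intros z. reflexivity.
        - intros i j z _ _ H1 H2. unfold piece in *. congruence.
        - intros z. exists (fst (proj1_sig z)). split; [exact (proj1 (proj2_sig z))| reflexivity].
        - intros i Hi. destruct (nth_error l i) as [c|] eqn:Ec.
          2:{ apply nth_error_None in Ec. unfold n in Hi. lia. }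
          assert (HAK : forall x, A i x -> closure X (proj1_sig c) x).
          { intros x [c' [E' H']]. rewrite Ec in E'. injection E' as ->. exact H'. }
          assert (HKA : forall x, closure X (proj1_sig c) x -> A i x).
          { intros x H. exists c. split; assumption. }
          apply (proj2 (Hpi _ _ (gmap X n A i _ HAK) (subspace_tych _ _ HtZ) (subspace_tych _ _ Htx)
                    (gmap_perfect X n A i _ HAK HKA Hi))).
          exact (proj2 (proj2_sig c)). }
      apply (proj1 (Hpi _ _ (fZ X n A) HtZ Htx (fZ_perfect X n A HAcl Hcov))). exact HPZ.
  - intros HPX y. exists (fun _ => True). split; [|split].
    + exists (fun _ => 1%R). split; [intros a; split; apply open_const| intros; split; [intros; lra| tauto]].
    + apply Hclh; [exact Htx| exact HPX| |apply closure_closed].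
      apply (open_ext X (fun _ => True)); [|apply open_full].
      intros x; split; [intros _ U _ Ux; exists x; tauto| tauto].
    + exists (fun _ => True). split; [apply open_full|]. split; [exact I|]. intros z _. apply Hdense.
Qed.
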